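(* Fix $d\in[0,D]$ and consider the problem \[ \min_{\{E_n\},\{t_n\}} \ \sum_{n=1}^N E_n\left(1+\frac{h_n}{g_n}\right) \] subject to \[ d\le \sum_{n=1}^N t_n W\ln\left(1+\frac{E_n h_n}{t_n\sigma^2 W}\right),\qquad 2\sum_{n=1}^N t_n\le T-\frac{Ld}{f_B},\qquad E_n\ge 0,\ t_n\ge 0\ \ \forall n. \] At an optimal solution of this problem, both the data constraint and the time constraint hold with equality: \[ d=\sum_{n=1}^N t_n W\ln\left(1+\frac{E_n h_n}{t_n\sigma^2W}\right),\qquad 2\sum_{n=1}^N t_n = T-\frac{Ld}{f_B}. \]
   Context: All parameters $N, h_n, g_n, W, \sigma^2, L, D, T, f_B$ are given positive constants, and $n$ ranges over $\{1,\dots,N\}$. The term $t_n W\ln\left(1+\frac{E_n h_n}{t_n\sigma^2W}\right)$ is interpreted as $0$ when $t_n=0$. *)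

(* Defs.v *)
(* R : realType, indices n : 'I_N (i.e. n = 1..N shifted to 0..N-1). *)
From HB Require Import structures.
From mathcomp Require Import all_boot all_order all_algebra.
From mathcomp Require Import all_classical all_reals all_analysis.
Set Implicit Arguments. Unset Strict Implicit. Unset Printing Implicit Defensive.
Import Order.TTheory GRing.Theory Num.Theory.
Local Open Scope ring_scope.

Section Problem.
Variables (R : realType) (N : nat) (h g : 'I_N -> R) (W sigma2 L T fB d : R).

Definition rate_term (E t : 'I_N -> R) (n : 'I_N) : R :=
  if t n == 0 then 0
  else t n * W * ln (1 + E n * h n / (t n * sigma2 * W)).

Definition total_rate (E t : 'I_N -> R) : R := \sum_(n < N) rate_term E t n.

Definition energy_cost (E : 'I_N -> R) : R := \sum_(n < N) E n * (1 + h n / g n).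

Definition feasible (E t : 'I_N -> R) : Prop :=
  [/\ d <= total_rate E t,
      2 * (\sum_(n < N) t n) <= T - L * d / fB
    & forall n, 0 <= E n /\ 0 <= t n].

Definition optimal (E t : 'I_N -> R) : Prop :=
  feasible E t /\
  forall E' t', feasible E' t' -> energy_cost E <= energy_cost E'.

Definition constraints_tight (E t : 'I_N -> R) : Prop :=
  d = total_rate E t /\ 2 * (\sum_(n < N) t n) = T - L * d / fB.

End Problem.

(* Main.v *)
From HB Require Import structures.
From mathcomp Require Import all_boot all_order all_algebra.
From mathcomp Require Import all_classical all_reals all_analysis.
From mathcomp Require Import ring lra.
Import Order.TTheory GRing.Theory Num.Theory.
Local Open Scope ring_scope.

Require Import Defs.
Lemma key0 (R : realType) (t t' a : R) : 0 < t -> t < t' -> 0 < a ->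
  t * ln (1 + a / t) < t' * ln (1 + a / t').
Proof.
move=> t0 tt a0.
have t'0 : 0 < t' by apply: lt_trans tt.
set b := a / t; set c := a / t'.
have c0 : 0 < c by rewrite /c divr_gt0.
have b0 : 0 < b by rewrite /b divr_gt0.
have cb : c < b by rewrite /c /b ltr_pM2l // ltf_pV2 // posrE.
set y := (b - c) / (1 + c).
have c1 : 0 < 1 + c by lra.
have y0 : 0 < y by rewrite /y divr_gt0 // subr_gt0.
have e1 : 1 + b = (1 + c) * (1 + y).
  by rewrite /y; field; rewrite gt_eqF.
have hy : ln (1 + y) < y.
  have := expR_gt1Dx (lt0r_neq0 y0).
  have p1 : 1 + y \in Num.pos by rewrite posrE; lra.
  have p2 : expR y \in Num.pos by rewrite posrE expR_gt0.
  rewrite -(ltr_ln p1 p2).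
  by rewrite expRK.
have hc : c / (1 + c) <= ln (1 + c).
  have := @le_ln1Dx _ (- (c / (1 + c))).
  have -> : 1 + - (c / (1 + c)) = (1 + c)^-1 by field; rewrite gt_eqF.
  rewrite lnV ?posrE //.
  have h1 : -1 < - (c / (1 + c)).
    rewrite ltrN2 ltr_pdivrMr //; lra.
  move=> /(_ h1); lra.
have lnb : ln (1 + b) = ln (1 + c) + ln (1 + y).
  by rewrite e1 lnM ?posrE //; lra.
have hy2 : y <= (b - c) / c * ln (1 + c).
  have -> : y = (b - c) / c * (c / (1 + c)) by rewrite /y; field; rewrite !gt_eqF.
  rewrite ler_pM2l // divr_gt0 // subr_gt0 //.
have : ln (1 + b) < b / c * ln (1 + c).
  have -> : b / c = 1 + (b - c) / c by field; rewrite gt_eqF.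
  rewrite mulrDl mul1r; lra.
have -> : b / c = t' / t by rewrite /b /c; field; rewrite !gt_eqF.
move=> h.
rewrite -(ltr_pM2l t0) in h.
by rewrite mulrA mulrCA divff ?gt_eqF // mulr1 in h.
Qed.

Lemma key (R : realType) (t t' e s W : R) : 0 < t -> t < t' -> 0 < e -> 0 < s -> 0 < W ->
  t * W * ln (1 + e / (t * s * W)) < t' * W * ln (1 + e / (t' * s * W)).
Proof.
move=> t0 tt e0 s0 W0.
have t'0 : 0 < t' by apply: lt_trans tt.
have -> : e / (t * s * W) = (e / (s * W)) / t by field; rewrite !gt_eqF.
have -> : e / (t' * s * W) = (e / (s * W)) / t' by field; rewrite !gt_eqF.
rewrite (mulrAC t) (mulrAC t') ltr_pM2r //.
by apply: key0 => //; rewrite divr_gt0 // mulr_gt0.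
Qed.

Lemma rate0 (R : realType) N (h : 'I_N -> R) W s (E t : 'I_N -> R) :
  (forall n, E n = 0) -> total_rate h W s E t = 0.
Proof.
move=> E0; rewrite /total_rate big1 // => n _; rewrite /rate_term E0 !mul0r addr0 ln1 mulr0.
by case: ifP.
Qed.

Lemma cost_ge0 (R : realType) N (h g E : 'I_N -> R) :
  (forall n, 0 < h n) -> (forall n, 0 < g n) -> (forall n, 0 <= E n) ->
  0 <= energy_cost h g E.
Proof.
move=> hp gp Ep; rewrite /energy_cost sumr_ge0 // => n _.
by rewrite mulr_ge0 // addr_ge0 // ltW // divr_gt0.
Qed.

Lemma cost_eq0 (R : realType) N (h g E : 'I_N -> R) :
  (forall n, 0 < h n) -> (forall n, 0 < g n) -> (forall n, 0 <= E n) ->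
  energy_cost h g E = 0 -> forall n, E n = 0.
Proof.
move=> hp gp Ep H n.
have F0 : forall i : 'I_N, xpredT i -> 0 <= E i * (1 + h i / g i).
  move=> i _; by rewrite mulr_ge0 // addr_ge0 // ltW // divr_gt0.
have := @psumr_eq0P _ _ xpredT (fun n => E n * (1 + h n / g n)) F0 H n isT.
have c : 0 < 1 + h n / g n by rewrite addr_gt0 // divr_gt0.
move/eqP; rewrite mulf_eq0 (gt_eqF c) orbF; by move/eqP.
Qed.

Lemma rate_tight (R : realType) N (h g : 'I_N -> R) (W s L T fB d : R) E t :
  (forall n, 0 < h n) -> (forall n, 0 < g n) -> 0 < W -> 0 < s -> 0 < d ->
  optimal h g W s L T fB d E t -> total_rate h W s E t = d.
Proof.
move=> hp gp Wp sp dp [[Hd Ht Hnn] Hopt].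
apply/eqP; rewrite eq_le Hd andbT leNgt; apply/negP => Hr.
set r := total_rate h W s E t in Hr Hd.
have r0 : 0 < r by apply: lt_trans Hr.
set lam := d / r.
have lam0 : 0 < lam by rewrite divr_gt0.
have lam1 : lam < 1 by rewrite ltr_pdivrMr // mul1r.
have Hsc : total_rate h W s (fun n => lam * E n) (fun n => lam * t n) = lam * r.
  rewrite /r /total_rate mulr_sumr; apply: eq_bigr => n _; rewrite /rate_term /=.
  rewrite mulf_eq0 (gt_eqF lam0) /=; case: eqP => [_|tn0]; first by rewrite mulr0.
  have -> : lam * E n * h n / (lam * t n * s * W) = E n * h n / (t n * s * W).
    by field; rewrite (gt_eqF Wp) (gt_eqF sp) (gt_eqF lam0) andbT /=; apply/eqP.
  ring.
have Hs0 : 0 <= \sum_(n < N) t n by rewrite sumr_ge0 // => n _; case: (Hnn n).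
have feas : feasible h W s L T fB d (fun n => lam * E n) (fun n => lam * t n).
  split.
  - by rewrite Hsc /lam divfK // gt_eqF.
  - rewrite -mulr_sumr mulrCA; apply: le_trans Ht.
    by rewrite ler_piMl // ?mulr_ge0 // ltW.
  - by move=> n; case: (Hnn n) => a b; split; rewrite mulr_ge0 // ltW.
have := Hopt _ _ feas.
have -> : energy_cost h g (fun n => lam * E n) = lam * energy_cost h g E.
  by rewrite /energy_cost mulr_sumr; apply: eq_bigr => n _; rewrite mulrA.
have c0 := @cost_ge0 _ _ h g E hp gp (fun n => (Hnn n).1).
move=> Hc.
have c00 : energy_cost h g E = 0 by apply/eqP; rewrite eq_le c0 andbT; nra.
have E0 := @cost_eq0 _ _ h g E hp gp (fun n => (Hnn n).1) c00.
by move: r0; rewrite /r rate0 // ltxx.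
Qed.
Arguments rate_tight [R N h g W s L T fB d E t].

Lemma time_tight (R : realType) N (h g : 'I_N -> R) (W s L T fB d : R) E t :
  (forall n, 0 < h n) -> (forall n, 0 < g n) -> 0 < W -> 0 < s -> 0 < d ->
  optimal h g W s L T fB d E t -> 2 * (\sum_(n < N) t n) = T - L * d / fB.
Proof.
move=> hp gp Wp sp dp opt.
have Hr := rate_tight hp gp Wp sp dp opt.
case: opt => [[Hd Ht Hnn] Hopt].
apply/eqP; rewrite eq_le Ht /= leNgt; apply/negP => Hlt.
have [n0 Hn0] : exists n0, rate_term h W s E t n0 != 0.
  case: (boolP [exists n, rate_term h W s E t n != 0]) => [/existsP //|].
  rewrite negb_exists => /forallP H.
  have : total_rate h W s E t = 0.
    by rewrite /total_rate big1 // => n _; move: (H n); rewrite negbK => /eqP.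
  by rewrite Hr => d0; move: dp; rewrite d0 ltxx.
move: Hn0; rewrite /rate_term; case: ifP => [_|/negbT tn0 Hn0]; first by rewrite eqxx.
have En0 : E n0 != 0.
  by apply/eqP => E0; move: Hn0; rewrite E0 !mul0r addr0 ln1 mulr0 eqxx.
have tp : 0 < t n0 by rewrite lt_neqAle eq_sym; case: (Hnn n0) => _ ->; rewrite andbT.
have Ep : 0 < E n0 by rewrite lt_neqAle eq_sym En0; case: (Hnn n0).
set S := T - L * d / fB in Ht Hlt *.
set X := \sum_(n < N) t n in Ht Hlt *.
set del := (S - 2 * X) / 2.
have delp : 0 < del by rewrite /del divr_gt0 // subr_gt0.
set t' := fun n => if n == n0 then t n + del else t n.
have sum' : \sum_(n < N) t' n = X + del.
  rewrite /X (bigD1 n0) //= [in RHS](bigD1 n0) //= /t' eqxx addrAC; congr (_ + _).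
  congr (_ + _); by apply: eq_bigr => n /negbTE ->.
have rate' : total_rate h W s E t < total_rate h W s E t'.
  rewrite /total_rate (bigD1 n0) //= [X in _ < X](bigD1 n0) //=.
  have -> : \sum_(i < N | i != n0) rate_term h W s E t' i =
            \sum_(i < N | i != n0) rate_term h W s E t i.
    by apply: eq_bigr => n /negbTE H; rewrite /rate_term /t' H.
  rewrite ltrD2r /rate_term /t' eqxx.
  rewrite (negbTE tn0).
  rewrite gt_eqF ?addr_gt0 //.
  by apply: key => //; [rewrite ltrDl | rewrite mulr_gt0].
have feas : feasible h W s L T fB d E t'.
  split.
  - by rewrite -Hr ltW.
  - rewrite sum'.
    have -> : 2 * (X + del) = S by rewrite /del; field.
    by [].
  - move=> n; case: (Hnn n) => a b; split => //; rewrite /t'; case: eqP => // _.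
    by rewrite addr_ge0 // ltW.
have opt' : optimal h g W s L T fB d E t' by split => // E'' t'' /Hopt.
have := rate_tight hp gp Wp sp dp opt'.
by move: rate'; rewrite Hr => /[swap] ->; rewrite ltxx.
Qed.
Arguments time_tight [R N h g W s L T fB d E t].

Theorem lemma3 (R : realType) (N : nat) (h g : 'I_N -> R)
  (W sigma2 L D T fB d : R) :
  (0 < N)%N -> (forall n, 0 < h n) -> (forall n, 0 < g n) ->
  0 < W -> 0 < sigma2 -> 0 < L -> 0 < D -> 0 < T -> 0 < fB ->
  0 <= d -> d <= D ->
  forall E t : 'I_N -> R,
  optimal h g W sigma2 L T fB d E t ->
  (0 < d -> constraints_tight h W sigma2 L T fB d E t) /\
  (exists E' t' : 'I_N -> R,
     optimal h g W sigma2 L T fB d E' t' /\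
     constraints_tight h W sigma2 L T fB d E' t').
Proof.
move=> N0 hp gp Wp sp Lp Dp Tp fBp d0 dD E t opt.
have part1 : 0 < d -> constraints_tight h W sigma2 L T fB d E t.
  move=> dp; split; first by rewrite (rate_tight hp gp Wp sp dp opt).
  exact: (time_tight hp gp Wp sp dp opt).
split => //.
move: d0; rewrite le_eqVlt => /orP [/eqP d0 | dp]; last first.
  by exists E, t; split => //; apply: part1.
subst d.
set i0 : 'I_N := Ordinal N0.
have S0 : T - L * 0 / fB = T by rewrite mulr0 mul0r subr0.
have rz : total_rate h W sigma2 (fun _ => 0) (fun n => if n == i0 then T / 2 else 0) = 0.
  exact: rate0.
have sumT : \sum_(n < N) (if n == i0 then T / 2 else 0) = T / 2.
  by rewrite (bigD1 i0) //= ?eqxx big1 ?addr0 // => n /negbTE ->.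
have T2 : 2 * (T / 2) = T by field.
exists (fun _ => 0), (fun n => if n == i0 then T / 2 else 0).
split; [split; [split|]|split].
- by rewrite rz.
- by rewrite sumT S0 T2.
- move=> n; split => //; case: ifP => // _; by rewrite divr_ge0 // ltW.
- move=> E'' t'' [_ _ Hnn].
  rewrite /energy_cost big1 => [|n _]; last by rewrite mul0r.
  exact: (@cost_ge0 _ _ h g E'' hp gp (fun n => (Hnn n).1)).
- by rewrite rz.
- by rewrite sumT S0 T2.
Qed.
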